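(* Let $s\ge1$ and $B\in\mathbb{F}_2^{s\times s}$, and define \[ H_X(B)=[\,B\otimes I_s \mid I_s\otimes B^{\mathsf T}\,],\qquad H_Z(B)=[\,I_s\otimes B \mid B^{\mathsf T}\otimes I_s\,]. \] If the Tanner graph of $B$ has no 4-cycles and no simple 6-cycles, then the Tanner graphs of $H_X(B)$ and of $H_Z(B)$ also have no 4-cycles and no simple 6-cycles.
   Context: $\otimes$ denotes the Kronecker product and $I_s$ the $s\times s$ identity over $\mathbb{F}_2$. The Tanner graph of a binary matrix $H$ is the bipartite graph whose vertices are the rows (check nodes) and columns (variable nodes) of $H$, with row $r$ adjacent to column $c$ iff $H_{rc}=1$. A simple $2\ell$-cycle is a cycle in this graph of length $2\ell$ with all vertices distinct. *)

(* Defs.v *)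
From HB Require Import structures.
From mathcomp Require Import all_boot all_algebra.
From mathcomp Require Export mxtens.
Set Implicit Arguments. Unset Strict Implicit. Unset Printing Implicit Defensive.
Import GRing.Theory.
Local Open Scope ring_scope.

(* Binary matrices are matrices over 'F_2; the Kronecker product A (x) B is
   mathcomp-real-closed's tensmx (notation A *t B), whose (i1*p+i2, j1*q+j2)
   entry is A i1 j1 * B i2 j2 (the standard Kronecker convention). *)

Definition tanner_adj {m n : nat} (H : 'M['F_2]_(m, n)) (r : 'I_m) (c : 'I_n) : bool :=
  H r c == 1.

(* The Tanner graph of H has a simple cycle of length 2l (l >= 2):
   distinct check nodes r_0..r_{l-1}, distinct variable nodes c_0..c_{l-1},
   with the cycle r_0 - c_0 - r_1 - c_1 - ... - r_{l-1} - c_{l-1} - r_0. *)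
Definition has_simple_cycle {m n : nat} (l : nat) (H : 'M['F_2]_(m, n)) : Prop :=
  exists (r : 'I_l -> 'I_m) (c : 'I_l -> 'I_n),
    injective r /\ injective c /\
    forall i : 'I_l, tanner_adj H (r i) (c i) /\
      tanner_adj H (r (ordS i)) (c i).

Definition no_4_6_cycles {m n : nat} (H : 'M['F_2]_(m, n)) : Prop :=
  ~ has_simple_cycle 2 H /\ ~ has_simple_cycle 3 H.

Definition HX {s : nat} (B : 'M['F_2]_s) : 'M['F_2]_(s * s, s * s + s * s) :=
  row_mx (B *t (1%:M : 'M['F_2]_s)) ((1%:M : 'M['F_2]_s) *t B^T).

Definition HZ {s : nat} (B : 'M['F_2]_s) : 'M['F_2]_(s * s, s * s + s * s) :=
  row_mx ((1%:M : 'M['F_2]_s) *t B) (B^T *t (1%:M : 'M['F_2]_s)).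

(* Main.v *)
Require Import Defs.
From HB Require Import structures.
From mathcomp Require Import all_boot all_algebra.
From mathcomp Require Import mxtens.
Set Implicit Arguments. Unset Strict Implicit. Unset Printing Implicit Defensive.
Import GRing.Theory.
Local Open Scope ring_scope.

Definition cyc (s l : nat) (P : 'I_s -> 'I_s -> bool) : Prop :=
  exists (r : 'I_l -> 'I_s) (c : 'I_l -> 'I_s),
    injective r /\ injective c /\ forall i : 'I_l, P (r i) (c i) /\ P (r (ordS i)) (c i).

Definition goodl (l : nat) : Prop :=
  (forall i : 'I_l, i != ordS i) /\
  (forall s (f : 'I_l -> 'I_s), (forall i, f i = f (ordS i)) -> forall i j, f i = f j) /\
  (forall s (a b : 'I_l -> 'I_s) (T : 'I_l -> bool),
     (forall i, (T i -> a i != a (ordS i) /\ b i = b (ordS i)) /\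
                (~~ T i -> a i = a (ordS i) /\ b i != b (ordS i))) ->
     (forall i, T i) \/ (forall i, ~~ T i)).

Definition o20 : 'I_2 := @Ordinal 2 0 isT.
Definition o21 : 'I_2 := @Ordinal 2 1 isT.
Lemma ord2P (i : 'I_2) : i = o20 \/ i = o21.
Proof. case: i => [[|[|k]] Hk]; [left|right|by []]; exact: val_inj. Qed.
Lemma oS20 : ordS o20 = o21. Proof. exact: val_inj. Qed.
Lemma oS21 : ordS o21 = o20. Proof. exact: val_inj. Qed.

Definition o30 : 'I_3 := @Ordinal 3 0 isT.
Definition o31 : 'I_3 := @Ordinal 3 1 isT.
Definition o32 : 'I_3 := @Ordinal 3 2 isT.
Lemma ord3P (i : 'I_3) : [\/ i = o30, i = o31 | i = o32].
Proof.
case: i => [[|[|[|k]]] Hk]; [apply: Or31|apply: Or32|apply: Or33|by []]; exact: val_inj.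
Qed.
Lemma oS30 : ordS o30 = o31. Proof. exact: val_inj. Qed.
Lemma oS31 : ordS o31 = o32. Proof. exact: val_inj. Qed.
Lemma oS32 : ordS o32 = o30. Proof. exact: val_inj. Qed.


Ltac neqx := match goal with H : is_true (?x != ?x) |- _ => by rewrite eqxx in H end.

Lemma good2 : goodl 2.
Proof.
split; [|split].
- by move=> i; case: (ord2P i) => ->.
- move=> s f H i j; have := H o20; have := H o21; rewrite oS20 oS21 => e1 e2.
  by case: (ord2P i) => ->; case: (ord2P j) => ->.
- move=> s a b T H.
  have [h0a h0b] := H o20; have [h1a h1b] := H o21.
  rewrite oS20 oS21 in h0a h0b h1a h1b.
  move: h0a h0b h1a h1b; move: (a o20) (a o21) (b o20) (b o21) => a0 a1 b0 b1.
  case E0: (T o20); case E1: (T o21) => /= h0a h0b h1a h1b.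
  + by left=> i; case: (ord2P i) => ->; rewrite ?E0 ?E1.
  + have [? ?] := h0a isT; have [? ?] := h1b isT; subst; neqx.
  + have [? ?] := h0b isT; have [? ?] := h1a isT; subst; neqx.
  + by right=> i; case: (ord2P i) => ->; rewrite ?E0 ?E1.
Qed.

Lemma good3 : goodl 3.
Proof.
split; [|split].
- by move=> i; case: (ord3P i) => ->.
- move=> s f H i j; have := H o30; have := H o31; have := H o32.
  rewrite oS30 oS31 oS32 => e1 e2 e3.
  by case: (ord3P i) => ->; case: (ord3P j) => ->.
- move=> s a b T H.
  have [h0a h0b] := H o30; have [h1a h1b] := H o31; have [h2a h2b] := H o32.
  rewrite oS30 oS31 oS32 in h0a h0b h1a h1b h2a h2b.
  move: h0a h0b h1a h1b h2a h2b.
  move: (a o30) (a o31) (a o32) (b o30) (b o31) (b o32) => a0 a1 a2 b0 b1 b2.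
  case E0: (T o30); case E1: (T o31); case E2: (T o32) => /= h0a h0b h1a h1b h2a h2b;
  try (by left=> i; case: (ord3P i) => ->; rewrite ?E0 ?E1 ?E2);
  try (by right=> i; case: (ord3P i) => ->; rewrite ?E0 ?E1 ?E2);
  repeat match goal with Hh : is_true true -> _ |- _ =>
    let e1 := fresh in let e2 := fresh in have [e1 e2] := Hh isT; clear Hh end;
  subst; neqx.
Qed.

Lemma prod_cyc l m n s (H : 'M['F_2]_(m,n)) (x y : 'I_m -> 'I_s) (t : 'I_n -> bool)
  (p q : 'I_n -> 'I_s) (P1 P2 : 'I_s -> 'I_s -> bool) :
  goodl l ->
  (forall r r', x r = x r' -> y r = y r' -> r = r') ->
  (forall c c', t c = t c' -> p c = p c' -> q c = q c' -> c = c') ->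
  (forall r c, tanner_adj H r c =
     if t c then P1 (x r) (p c) && (y r == q c) else (x r == p c) && P2 (y r) (q c)) ->
  has_simple_cycle l H -> cyc l P1 \/ cyc l P2.
Proof.
move=> [Hneq [Hconst Hmix]] injR injC Hadj [r [c [ir [ic Hc]]]].
have Hrn i : r i != r (ordS i).
  by apply/eqP => /ir /eqP; rewrite (negbTE (Hneq i)).
have facts i : (t (c i) -> x (r i) != x (r (ordS i)) /\ y (r i) = y (r (ordS i))) /\
               (~~ t (c i) -> x (r i) = x (r (ordS i)) /\ y (r i) != y (r (ordS i))).
  have [h1 h2] := Hc i.
  rewrite !Hadj in h1 h2; split => T.
  - rewrite T in h1 h2; case/andP: h1 => _ /eqP e1; case/andP: h2 => _ /eqP e2.
    split; last by rewrite e1 e2.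
    apply/eqP => ex; move: (Hrn i); rewrite (injR _ _ ex) ?eqxx //; by rewrite e1 e2.
  - rewrite (negbTE T) in h1 h2; case/andP: h1 => /eqP e1 _; case/andP: h2 => /eqP e2 _.
    split; first by rewrite e1 e2.
    apply/eqP => ey; move: (Hrn i); rewrite (injR _ _ _ ey) ?eqxx //; by rewrite e1 e2.
case: (Hmix _ (fun i => x (r i)) (fun i => y (r i)) (fun i => t (c i)) facts) => hT.
- left.
  have yc : forall i j, y (r i) = y (r j).
    by apply: Hconst => i; have [/(_ (hT i)) [_ ->] _] := facts i.
  have yq i : y (r i) = q (c i).
    by have [h1 _] := Hc i; move: h1; rewrite Hadj hT => /andP [_ /eqP].
  exists (fun i => x (r i)), (fun i => p (c i)); split; [|split].
  + by move=> i j e; apply: ir; apply: injR.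
  + move=> i j e; apply: ic; apply: injC => //; first by rewrite !hT.
    by rewrite -!yq.
  + move=> i; have [h1 h2] := Hc i; move: h1 h2; rewrite !Hadj hT.
    by move=> /andP [-> _] /andP [-> _].
- right.
  have xc : forall i j, x (r i) = x (r j).
    by apply: Hconst => i; have [_ /(_ (hT i)) [-> _]] := facts i.
  have xp i : x (r i) = p (c i).
    have [h1 _] := Hc i; move: h1; rewrite Hadj (negbTE (hT i)).
    by move=> /andP [/eqP].
  exists (fun i => y (r i)), (fun i => q (c i)); split; [|split].
  + by move=> i j e; apply: ir; apply: injR.
  + move=> i j e; apply: ic; apply: injC => //; first by rewrite !(negbTE (hT _)).
    by rewrite -!xp.
  + move=> i; have [h1 h2] := Hc i; move: h1 h2; rewrite !Hadj (negbTE (hT i)).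
    by move=> /andP [_ ->] /andP [_ ->].
Qed.

Lemma cycT s l (P : 'I_s -> 'I_s -> bool) : cyc l (fun u v => P v u) -> cyc l P.
Proof.
move=> [r [c [ir [ic Hc]]]].
exists c, (fun i => r (ordS i)); split; [|split] => //.
- by move=> i j /ir /ordS_inj.
- by move=> i; have [_ ?] := Hc i; have [? _] := Hc (ordS i).
Qed.

Section Idx.
Variable s : nat.
Definition rx (r : 'I_(s*s)) := (mxtens_unindex r).1.
Definition ry (r : 'I_(s*s)) := (mxtens_unindex r).2.
Definition cidx (c : 'I_(s*s+s*s)) : 'I_(s*s) := match split c with inl u => u | inr u => u end.
Definition ct (c : 'I_(s*s+s*s)) : bool := if split c is inl _ then true else false.
Definition cp c := (mxtens_unindex (cidx c)).1.
Definition cq c := (mxtens_unindex (cidx c)).2.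

Lemma injR r r' : rx r = rx r' -> ry r = ry r' -> r = r'.
Proof.
move=> e1 e2; rewrite -[r]mxtens_unindexK -[r']mxtens_unindexK.
by rewrite [mxtens_unindex r]surjective_pairing [mxtens_unindex r']surjective_pairing -/(rx r) -/(ry r) e1 e2.
Qed.

Lemma injC c c' : ct c = ct c' -> cp c = cp c' -> cq c = cq c' -> c = c'.
Proof.
move=> e0 e1 e2.
have ei : cidx c = cidx c'.
  rewrite -[cidx c]mxtens_unindexK -[cidx c']mxtens_unindexK.
  by rewrite [mxtens_unindex (cidx c)]surjective_pairing [mxtens_unindex (cidx c')]surjective_pairing -/(cp c) -/(cq c) e1 e2.
move: e0 ei; rewrite /ct /cidx.
case: (split c) (splitK c) => u <-; case: (split c') (splitK c') => v <- //= _ -> //.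
Qed.

Lemma F2mul1 (a : 'F_2) (b : bool) : (a * (1 *+ b) == 1) = (a == 1) && b.
Proof. by case: b; rewrite ?mulr1n ?mulr0n ?mulr1 ?mulr0 ?andbT ?andbF. Qed.
Lemma F2mul1' (a : 'F_2) (b : bool) : ((1 *+ b) * a == 1) = b && (a == 1).
Proof. by rewrite mulrC F2mul1 andbC. Qed.

Lemma adjHX (B : 'M['F_2]_s) r c : tanner_adj (HX B) r c =
  if ct c then tanner_adj B (rx r) (cp c) && (ry r == cq c)
  else (rx r == cp c) && tanner_adj B (cq c) (ry r).
Proof.
rewrite /tanner_adj /HX /ct /cp /cq /cidx /rx /ry /row_mx mxE.
case: (split c) => u; rewrite !mxE ?F2mul1 ?F2mul1' //.
Qed.

Lemma adjHZ (B : 'M['F_2]_s) r c : tanner_adj (HZ B) r c =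
  if ~~ ct c then tanner_adj B (cp c) (rx r) && (ry r == cq c)
  else (rx r == cp c) && tanner_adj B (ry r) (cq c).
Proof.
rewrite /tanner_adj /HZ /ct /cp /cq /cidx /rx /ry /row_mx mxE.
case: (split c) => u; rewrite !mxE ?F2mul1 ?F2mul1' //.
Qed.
End Idx.

Lemma cycB s l (B : 'M['F_2]_s) : has_simple_cycle l B <-> cyc l (tanner_adj B).
Proof. by []. Qed.

Theorem mainTheorem2 (s : nat) (B : 'M['F_2]_s) :
  (1 <= s)%N -> no_4_6_cycles B ->
  no_4_6_cycles (HX B) /\ no_4_6_cycles (HZ B).
Proof.
move=> _ [n4 n6].
have GX l : goodl l -> has_simple_cycle l (HX B) -> has_simple_cycle l B.
  move=> g hc; case: (prod_cyc (P1 := tanner_adj B) (P2 := fun u v => tanner_adj B v u) g (@injR s) (@injC s) (adjHX B) hc) => //.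
  by move/cycT.
have GZ l : goodl l -> has_simple_cycle l (HZ B) -> has_simple_cycle l B.
  move=> g hc.
  have iC : forall c c' : 'I_(s*s+s*s), ~~ ct c = ~~ ct c' -> cp c = cp c' -> cq c = cq c' -> c = c'.
    by move=> c c' e; exact: (@injC s c c' (negb_inj e)).
  case: (prod_cyc (P2 := tanner_adj B) (P1 := fun u v => tanner_adj B v u) g (@injR s) iC (adjHZ B) hc) => //.
  by move/cycT.
split; split.
- by move/(GX _ good2).
- by move/(GX _ good3).
- by move/(GZ _ good2).
- by move/(GZ _ good3).
Qed.
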